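(* Let $d\geq 1$ and let $x_1,\dots,x_m\in\mathbb{R}^d$ be distinct vectors such that $\|x_i+x_j\|_2=1$ for all $i\neq j$, where $\|\cdot\|_2$ is the Euclidean norm. Then $m\leq d+1$ if $d\neq 2$, and $m\leq 4$ if $d=2$. Both bounds are attained: for each $d$ there exist such configurations with $m=d+1$ (if $d\neq 2$) and $m=4$ (if $d=2$). *)

(* Defs.v *)
(* Vectors of R^d are row vectors 'rV[R]_d over an arbitrary
   real closed field R (includes the real numbers). *)
From HB Require Import structures.
From mathcomp Require Import all_boot all_order all_algebra.
Set Implicit Arguments. Unset Strict Implicit. Unset Printing Implicit Defensive.
Import Order.TTheory GRing.Theory Num.Theory.
Local Open Scope ring_scope.

Definition eucl_norm (R : rcfType) (d : nat) (x : 'rV[R]_d) : R :=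
  Num.sqrt (\sum_(i < d) x 0 i ^+ 2).

Definition sumnorm_bound (d : nat) : nat := if d == 2%N then 4%N else d.+1.

(* Main.v *)
Require Import Defs.
From HB Require Import structures.
From mathcomp Require Import all_boot all_order all_algebra.
Set Implicit Arguments. Unset Strict Implicit. Unset Printing Implicit Defensive.
Import Order.TTheory GRing.Theory Num.Theory.
Local Open Scope ring_scope.

Lemma aux (R : zmodType) (a b p : R) : p = a + b + p - a - b.
Proof. by rewrite -addrA -opprD [a + b + p]addrC addrK. Qed.

Lemma aux2 (R : pzRingType) (p q : R) : (1 - p - q) + (q + (p - 1)) = 0.
Proof. by rewrite -addrA addKr -addrA addKr subrr. Qed.
Lemma aux3 (R : pzRingType) (p : R) : p *+ 2 + (p + (p - 1)) = (p *+ 4 - 1) *+ 1.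
Proof. by rewrite mulr1n !addrA -mulrSr -mulrSr. Qed.

Section Basic.
Variables (R : rcfType) (d : nat).
Definition sq (v : 'rV[R]_d) : R := \sum_(k < d) v 0 k ^+ 2.
Definition ip (u v : 'rV[R]_d) : R := \sum_(k < d) u 0 k * v 0 k.

Lemma sq_ge0 v : 0 <= sq v.
Proof. by apply: sumr_ge0 => k _; rewrite sqr_ge0. Qed.

Lemma norm1P v : eucl_norm v = 1 <-> sq v = 1.
Proof.
rewrite /eucl_norm -/(sq v); split => [H|->]; last exact: sqrtr1.
by rewrite -(sqr_sqrtr (sq_ge0 v)) H expr1n.
Qed.

Lemma sqD u v : sq (u + v) = sq u + sq v + ip u v *+ 2.
Proof.
rewrite /sq /ip -sumrMnl -!big_split /=; apply: eq_bigr => k _.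
by rewrite mxE sqrrD addrAC.
Qed.

Lemma ipN u v : ip u (- v) = - ip u v.
Proof. by rewrite /ip -sumrN; apply: eq_bigr => k _; rewrite mxE mulrN. Qed.

Lemma sqN v : sq (- v) = sq v.
Proof. by apply: eq_bigr => k _; rewrite mxE sqrrN. Qed.

Lemma ipC u v : ip u v = ip v u.
Proof. by apply: eq_bigr => k _; rewrite mulrC. Qed.

Lemma ipxx v : ip v v = sq v.
Proof. by apply: eq_bigr => k _; rewrite expr2. Qed.

Lemma sq_eq0 v : sq v = 0 -> v = 0.
Proof.
move=> H; apply/rowP => k; rewrite mxE.
have := psumr_eq0P (fun k _ => sqr_ge0 (v 0 k)) H (i := k) isT.
by move/eqP; rewrite sqrf_eq0 => /eqP.
Qed.
End Basic.
Section Main.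
Variables (R : rcfType) (d : nat).
Local Notation n := (d + 2)%N.
Variable x : 'I_n -> 'rV[R]_d.
Hypothesis xinj : injective x.
Hypothesis xH : forall i j, i != j -> eucl_norm (x i + x j) = 1.

Lemma gram i j : i != j -> ip (x i) (x j) *+ 2 = 1 - sq (x i) - sq (x j).
Proof.
move=> /xH /norm1P; rewrite sqD => <-; exact: aux.
Qed.

Definition a i := sq (x i).
Definition c i := a i *+ 4 - 1.

Lemma nn i j : i != j -> c i = 0 -> c j = 0 -> False.
Proof.
move=> ij ci cj; have := xinj; move/(_ i j) => H.
suff : x i - x j = 0 by move/eqP; rewrite subr_eq0 => /eqP/H/eqP; rewrite (negbTE ij).
apply: sq_eq0; rewrite sqD sqN ipN mulNrn gram //.
move: ci cj; rewrite /c /a => /eqP; rewrite subr_eq0 => /eqP ci /eqP.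
rewrite subr_eq0 => /eqP cj.
rewrite -[1 - _ - _]addrA -opprD opprB addrA -mulr2n.
apply/eqP; rewrite subr_eq0 -(@eqr_pMn2r _ 2) // -mulrnA /= mulrnDl ci cj.
by rewrite mulr2n.
Qed.
End Main.
Section Mat.
Variables (R : rcfType) (d : nat).
Local Notation n := (d + 2)%N.
Variable x : 'I_n -> 'rV[R]_d.
Hypothesis xinj : injective x.
Hypothesis xH : forall i j, i != j -> eucl_norm (x i + x j) = 1.

Definition X : 'M[R]_(n, d) := \matrix_(i, k) x i 0 k.
Definition Y : 'M[R]_(n, 2) := \matrix_(i, k) (if (k : nat) == 0%N then a x i else 1).
Definition A : 'M[R]_(n, d + 2) := row_mx X Y.
Definition L2 : 'M[R]_2 := \matrix_(k, l)
  (if (k : nat) == 0%N then (if (l : nat) == 0%N then 0 else 1)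
   else (if (l : nat) == 0%N then 1 else -1)).
Definition L : 'M[R]_(d + 2) := block_mx (2%:M) 0 0 L2.
Definition C : 'M[R]_n := diag_mx (\row_i c x i).

Lemma ALA : A *m L *m A^T = C.
Proof.
rewrite /A /L mul_row_block !mulmx0 addr0 add0r tr_row_mx mul_row_col.
rewrite mul_mx_scalar.
apply/matrixP => i j; rewrite !mxE.
have -> : \sum_k (2 *: X) i k * X^T k j = ip (x i) (x j) *+ 2.
  rewrite /ip -sumrMnl; apply: eq_bigr => k _.
  by rewrite !mxE -mulrA mulr_natl.
rewrite !big_ord_recl !big_ord0 !mxE /=.
rewrite !big_ord_recl !big_ord0 !mxE /=.
rewrite !mulr0 !mul1r !mulr1 !addr0 !add0r.
have [<-|ij] := eqVneq i j.
  by rewrite ipxx mul1r; exact: aux3.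
by rewrite gram // mul1r mulr0n; exact: aux2.
Qed.

Definition L2i : 'M[R]_2 := \matrix_(k, l)
  (if (k : nat) == 0%N then 1 else (if (l : nat) == 0%N then 1 else 0)).

Lemma L2L2i : L2 *m L2i = 1%:M.
Proof.
apply/matrixP => i j; rewrite !mxE !big_ord_recl big_ord0 !mxE.
case: i => [[|[|i]] Hi] //=; case: j => [[|[|j]] Hj] //=.
- by rewrite mul0r mulr1 add0r addr0.
- by rewrite mul0r mulr0 add0r addr0.
- by rewrite !mulr1 addr0 subrr.
- by rewrite mulr1 mulr0 !addr0.
Qed.

Lemma detL2 : \det L2 != 0.
Proof.
apply/negP => /eqP H; have := congr1 determinant L2L2i.
by rewrite det_mulmx H mul0r det1 => /eqP; rewrite eq_sym oner_eq0.
Qed.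

Lemma detL : \det L != 0.
Proof.
rewrite /L det_ublock det_scalar mulf_neq0 ?detL2 // expf_neq0 //.
by rewrite pnatr_eq0.
Qed.

Lemma cnz i : c x i != 0.
Proof.
apply/negP => /eqP ci.
have dC : \det C = 0 by rewrite det_diag (bigD1 i) //= mxE ci mul0r.
have dA : \det A == 0.
  move: dC; rewrite -ALA !det_mulmx det_tr => /eqP.
  by rewrite !mulf_eq0 (negbTE detL) orbF orbb.
move/det0P: dA => [v vnz vA].
have vC : v *m C = 0 by rewrite -ALA !mulmxA vA !mul0mx.
have vk k : k != i -> v 0 k = 0.
  move=> ki; have := congr1 (fun M : 'M[R]_(1, n) => M 0 k) vC; rewrite /C mul_mx_diag !mxE.
  move/eqP; rewrite mulf_eq0 => /orP [/eqP //|/eqP ck].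
  by case: (nn xinj xH ki ck ci).
have vi : v 0 i = 0.
  have := congr1 (fun M : 'M[R]_(1, d + 2) => M 0 (rshift d (Ordinal (isT : (1 < 2)%N)))) vA.
  rewrite !mxE (bigD1 i) //= big1 ?addr0; last first.
    by move=> k ki; rewrite vk ?mul0r.
  by rewrite /A row_mxEr mxE /= mulr1.
move/negP: vnz; apply; apply/eqP/rowP => k; rewrite mxE.
by have [->|ki] := eqVneq k i; [exact: vi | exact: vk].
Qed.

Definition D : 'M[R]_n := diag_mx (\row_i (c x i)^-1).

Lemma key : (A^T *m (D *m A)) *m L = 1%:M.
Proof.
have CD : C *m D = 1%:M.
  rewrite /C /D mulmx_diag -diag_const_mx; congr diag_mx.
  by apply/rowP => k; rewrite !mxE divff // cnz.
have H1 : A *m (L *m A^T *m D) = 1%:M by rewrite !mulmxA ALA CD.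
have H2 := mulmx1C H1; rewrite -!mulmxA in H2.
exact: mulmx1C H2.
Qed.

Lemma sums : \sum_i (c x i)^-1 = 0 /\ \sum_i (c x i)^-1 * a x i = 1.
Proof.
have := key; rewrite /A tr_row_mx mul_mx_row mul_col_row /L mulmx_block.
rewrite (scalar_mx_block d 2) => /eq_block_mx [_ _ _].
rewrite mulmx0 add0r => H.
have e10 := congr1 (fun M : 'M[R]_2 => M (Ordinal (isT : (1 < 2)%N)) 0) H.
have e11 := congr1 (fun M : 'M[R]_2 => M (Ordinal (isT : (1 < 2)%N)) (Ordinal (isT : (1 < 2)%N))) H.
move: e10 e11; rewrite /D !mxE !big_ord_recl !big_ord0 !mxE /=.
rewrite mul_diag_mx.
have -> : \sum_(j < n) Y^T (Ordinal (isT : (1 < 2)%N)) j * (\matrix_(i, j0) ((\row_i (c x i)^-1) 0 i * Y i j0)) j ord0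
   = \sum_i (c x i)^-1 * a x i.
  by apply: eq_bigr => j _; rewrite !mxE /= mul1r.
have -> : \sum_(j < n) Y^T (Ordinal (isT : (1 < 2)%N)) j * (\matrix_(i, j0) ((\row_i (c x i)^-1) 0 i * Y i j0)) j (lift ord0 ord0)
   = \sum_i (c x i)^-1.
  by apply: eq_bigr => j _; rewrite !mxE /= mul1r mulr1.
rewrite mulr0 add0r !addr0 mulr1 mulrN1 => e0; rewrite e0 subr0 => e1.
by rewrite mulr1 in e1.
Qed.

Lemma d2 : d = 2%N.
Proof.
have [s0 s1] := sums.
have : (\sum_i (c x i)^-1 * a x i) *+ 4 = \sum_i (1 + (c x i)^-1).
  rewrite -sumrMnl; apply: eq_bigr => i _.
  have -> : (c x i)^-1 * a x i *+ 4 = (c x i)^-1 * (c x i + 1) by rewrite -mulrnAr /c subrK.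
  by rewrite mulrDr mulr1 mulVf ?cnz.
rewrite big_split /= s0 s1 addr0 sumr_const card_ord => /eqP.
rewrite eqr_nat => /eqP; rewrite addn2 => -[<-].
done.
Qed.
End Mat.



Lemma widen_inj m n (h : (m <= n)%N) : injective (widen_ord h).
Proof. by move=> i j /(congr1 val) /= /val_inj. Qed.

Lemma comp_ok (R : rcfType) d m k (x : 'I_m -> 'rV[R]_d) (g : 'I_k -> 'I_m) :
  injective x -> (forall i j, i != j -> eucl_norm (x i + x j) = 1) ->
  injective g ->
  injective (x \o g) /\ (forall i j, i != j -> eucl_norm ((x \o g) i + (x \o g) j) = 1).
Proof.
move=> xi xH gi; split; first exact: inj_comp.
move=> i j ij; apply: xH; apply: contra ij => /eqP/gi ->; exact: eqxx.
Qed.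

Definition cc (R : rcfType) d (v : 'rV[R]_d) := sq v *+ 4 - 1.

Lemma upper (R : rcfType) d m (x : 'I_m -> 'rV[R]_d) :
  injective x -> (forall i j, i != j -> eucl_norm (x i + x j) = 1) ->
  (m <= sumnorm_bound d)%N.
Proof.
move=> xi xH; rewrite /sumnorm_bound.
case: (leqP (d + 2) m) => hm; last first.
  case: ifP => [/eqP e|_]; last by rewrite -ltnS -addn2.
  by subst d; exact: ltnW.
have [yi yH] := comp_ok xi xH (widen_inj (h:=hm)).
have d2' := d2 yi yH; subst d; rewrite eqxx.
case: (leqP m 4) => // h5.
pose t (k : 'I_5) := (cc (x (widen_ord h5 k)))^-1.
have tj (j : 'I_5) : \sum_k t k = t j.
  rewrite (bigD1_ord j) //=.
  have gi : injective (fun i : 'I_4 => widen_ord h5 (lift j i)).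
    by move=> i1 i2 /widen_inj /lift_inj.
  have [zi zH] := comp_ok xi xH gi.
  have [s0 _] := @sums R 2 _ zi zH.
  have e : \sum_(i < 4) t (lift j i) = 0 := s0.
  by rewrite e addr0.
have T0 : \sum_k t k = 0.
  have : \sum_k t k = \sum_(k < 5) \sum_k t k by apply: eq_bigr => k _; rewrite (tj k).
  rewrite sumr_const card_ord mulrS -{1}[\sum_k t k]addr0 => /addrI /esym/eqP.
  by rewrite mulrn_eq0 /= => /eqP.
have := tj (lift ord0 ord0); rewrite T0 => /esym/eqP; rewrite invr_eq0 => /eqP.
have gi : injective (fun i : 'I_4 => widen_ord h5 (lift ord0 i)).
  by move=> i1 i2 /widen_inj /lift_inj.
have [zi zH] := comp_ok xi xH gi.
have := @cnz R 2 _ zi zH ord0.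
move=> /eqP H1 H2; exfalso; apply: H1; exact: H2.
Qed.
Section Num.
Variable R : rcfType.

Lemma qq : (2^-1 : R) + 2^-1 = 1.
Proof. by rewrite [RHS]splitr mul1r. Qed.

Lemma two_neq0 : (2 : R) != 0.
Proof. by rewrite pnatr_eq0. Qed.

Lemma q4 : (2^-1 : R) *+ 4 != 1.
Proof.
rewrite (_ : 4 = 2 * 2)%N // mulrnA mulr2n mulr2n qq -mulr2n.
by rewrite (eqr_nat R 2 1).
Qed.

Lemma wlemma (r : R) (d : nat) : 0 <= r -> r ^+ 2 = d.+1%:R ->
  ((r + 1)^-1) ^+ 2 *+ d + (r + 1)^-1 *+ 2 = 1.
Proof.
move=> r0 r2.
have w0 : r + 1 != 0 by rewrite gt_eqF // ltr_wpDl.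
have e : (r + 1) ^+ 2 = d%:R + (r + 1) *+ 2.
  rewrite sqrrD1 r2 -addn1 natrD -!addrA.
  by rewrite mulr2n [1 + _]addrC -!addrA [1 + (r + 1)]addrCA.
apply: (mulIf (expf_neq0 2 w0)).
by rewrite mul1r mulrDl !mulrnAl -exprMn mulVf // expr1n expr2 mulrA mulVf // mul1r -expr2 e.
Qed.
End Num.
Lemma inj_of (R : rcfType) d m (x : 'I_m -> 'rV[R]_d) :
  (forall i j, i != j -> eucl_norm (x i + x j) = 1) ->
  (forall i j, i != j -> (sq (x i) *+ 4 != 1) || (sq (x j) *+ 4 != 1)) ->
  injective x.
Proof.
move=> H N i j e; apply/eqP; apply/negPn/negP => ij.
have := H i j ij; move/norm1P; rewrite -e sqD ipxx => E.
have := N i j ij; rewrite -e orbb => /negP; apply; apply/eqP.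
by rewrite -E (_ : 4 = 2 + 2)%N // mulrnDr mulr2n.
Qed.

Section Gen.
Variables (R : rcfType) (d : nat).
Local Notation q := (2^-1 : R).
Definition tt0 : R := Num.sqrt q.
Definition rr : R := Num.sqrt (d.+1%:R).
Definition ss : R := (rr + 1)^-1 * tt0.
Definition yy (i : 'I_d.+1) : 'rV[R]_d :=
  \row_(k < d) (if (i < d)%N then (if (k : nat) == (i : nat) then tt0 else 0) else ss).

Lemma tt2 : tt0 ^+ 2 = q.
Proof. by rewrite sqr_sqrtr // invr_ge0 ler0n. Qed.

Lemma sq_lt (i : 'I_d.+1) : (i < d)%N -> sq (yy i) = q.
Proof.
move=> id; rewrite /sq (bigD1 (Ordinal id)) //= big1 ?addr0.
  rewrite mxE id /= eqxx /=. exact: tt2.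
move=> k ki; rewrite mxE id ifF ?expr0n //.
by apply: contraNF ki => /eqP e; apply/eqP/val_inj.
Qed.

Lemma sq_ge (i : 'I_d.+1) : ~~ (i < d)%N -> sq (yy i) = ss ^+ 2 *+ d.
Proof.
move=> id; rewrite /sq (eq_bigr (fun _ => ss ^+ 2)) ?sumr_const ?card_ord //.
by move=> k _; rewrite mxE (negbTE id).
Qed.

Lemma ip_lt (i j : 'I_d.+1) : (i < d)%N -> (j < d)%N -> i != j -> ip (yy i) (yy j) = 0.
Proof.
move=> id jd ij; rewrite /ip big1 // => k _; rewrite !mxE id jd.
case: eqP => [ki|]; last by rewrite mul0r.
case: eqP => [kj|]; last by rewrite mulr0.
by move: ij; rewrite -val_eqE /= -ki -kj eqxx.
Qed.

Lemma ip_lg (i j : 'I_d.+1) : (i < d)%N -> ~~ (j < d)%N -> ip (yy i) (yy j) = tt0 * ss.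
Proof.
move=> id jd; rewrite /ip (bigD1 (Ordinal id)) //= big1 ?addr0.
  by rewrite !mxE id eqxx (negbTE jd).
move=> k ki; rewrite !mxE id ifF ?mul0r //.
by apply: contraNF ki => /eqP e; apply/eqP/val_inj.
Qed.

Lemma key_gen : ss ^+ 2 *+ d + (tt0 * ss) *+ 2 = q.
Proof.
have r0 : 0 <= rr by exact: sqrtr_ge0.
have r2 : rr ^+ 2 = d.+1%:R by rewrite sqr_sqrtr // ler0n.
have := wlemma r0 r2 => W.
by rewrite /ss exprMn tt2 mulrCA -expr2 tt2 -[(_ * 2^-1) *+ d]mulrnAl -[(_ * 2^-1) *+ 2]mulrnAl -mulrDl W mul1r.
Qed.

Lemma gen_ok (i j : 'I_d.+1) : i != j -> eucl_norm (yy i + yy j) = 1.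
Proof.
move=> ij; apply/norm1P; rewrite sqD.
case: (ltnP i d) => id; case: (ltnP j d) => jd.
- by rewrite sq_lt // sq_lt // ip_lt // mul0rn addr0 qq.
- by rewrite sq_lt // sq_ge -?leqNgt // ip_lg -?leqNgt // -addrA key_gen qq.
- by rewrite sq_ge -?leqNgt // sq_lt // ipC ip_lg -?leqNgt // addrAC key_gen qq.
- exfalso; move: ij; rewrite -val_eqE.
  have ei : val i = d by apply/eqP; rewrite eqn_leq id -ltnS ltn_ord.
  have ej : val j = d by apply/eqP; rewrite eqn_leq jd -ltnS ltn_ord.
  by rewrite ei ej eqxx.
Qed.

Lemma gen_inj : injective yy.
Proof.
apply: inj_of => [i j|i j ij]; first exact: gen_ok.
case: (ltnP i d) => id; first by rewrite sq_lt //; apply/orP; left; exact: q4.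
case: (ltnP j d) => jd; first by rewrite (sq_lt jd); apply/orP; right; exact: q4.
exfalso; move: ij; rewrite -val_eqE.
have ei : val i = d by apply/eqP; rewrite eqn_leq id -ltnS ltn_ord.
have ej : val j = d by apply/eqP; rewrite eqn_leq jd -ltnS ltn_ord.
by rewrite ei ej eqxx.
Qed.
End Gen.
Section Four.
Variable R : rcfType.
Local Notation q := (2^-1 : R).
Definition hh : R := Num.sqrt 3.
Definition zz (i : 'I_4) : 'rV[R]_2 := \row_(k < 2)
  match val i with
  | 0 => 0
  | 1 => if (k : nat) == 0%N then 1 else 0
  | 2 => if (k : nat) == 0%N then - q else hh * q
  | _ => if (k : nat) == 0%N then - q else - (hh * q)
  end.

Lemma hh2 : hh ^+ 2 = 3.
Proof. by rewrite sqr_sqrtr // ler0n. Qed.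

Lemma qq2 : q *+ 2 = 1.
Proof. by rewrite mulr2n qq. Qed.

Lemma F1 : q ^+ 2 + (hh * q) ^+ 2 = 1.
Proof.
rewrite exprMn hh2 -{1}[q ^+ 2]mul1r -mulrDl.
have e : (1 + 3 : R) = 2 * 2 by rewrite -natrM -mulrS.
by rewrite e expr2 mulrACA divff ?mul1r // two_neq0.
Qed.

Lemma F2 : - q * - q + hh * q * - (hh * q) = - q.
Proof.
rewrite mulrNN mulrN -!expr2 exprMn hh2 -{1}[q ^+ 2]mul1r -mulrBl.
have e3 : (3 : R) = 1 + 2 by rewrite -mulrS.
by rewrite e3 opprD addNKr mulNr expr2 mulrA divff ?mul1r // two_neq0.
Qed.

Lemma sq2 (v : 'rV[R]_2) : sq v = v 0 ord0 ^+ 2 + v 0 (lift ord0 ord0) ^+ 2.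
Proof. by rewrite /sq !big_ord_recl big_ord0 addr0. Qed.

Lemma ip2 (u v : 'rV[R]_2) : ip u v = u 0 ord0 * v 0 ord0 + u 0 (lift ord0 ord0) * v 0 (lift ord0 ord0).
Proof. by rewrite /ip !big_ord_recl big_ord0 addr0. Qed.

Lemma zz_sq (i : 'I_4) : sq (zz i) = if val i == 0%N then 0 else 1.
Proof.
rewrite sq2 !mxE; case: i => [[|[|[|[|i]]]] Hi] //=.
- by rewrite expr2 mul0r addr0.
- by rewrite expr1n expr2 mul0r addr0.
- by rewrite sqrrN F1.
- by rewrite !sqrrN F1.
Qed.

Lemma zz_ip (i j : 'I_4) : (0 < i)%N -> (i < j)%N -> ip (zz i) (zz j) = - q.
Proof.
rewrite ip2 !mxE; case: i => [[|[|[|[|i]]]] Hi] //=; case: j => [[|[|[|[|j]]]] Hj] //= _ _.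
- by rewrite mul1r mul0r addr0.
- by rewrite mul1r mul0r addr0.
- exact: F2.
Qed.

Lemma zz_ip0 (j : 'I_4) : ip (zz ord0) (zz j) = 0.
Proof. by rewrite ip2 !mxE /= !mul0r addr0. Qed.

Lemma four_ok (i j : 'I_4) : i != j -> eucl_norm (zz i + zz j) = 1.
Proof.
wlog : i j / (i < j)%N.
  move=> W ij; case: (ltngtP i j) => [l|l|e]; first exact: W.
  - by rewrite addrC W // eq_sym.
  - by move: ij; rewrite -val_eqE /= e eqxx.
move=> l _; apply/norm1P; rewrite sqD !zz_sq.
case: i l => [[|i] Hi] l /=.
  have -> : Ordinal Hi = ord0 by apply: val_inj.
  rewrite zz_ip0 mul0rn addr0 add0r; case: j l => [[|j] Hj] //=.
rewrite (negbTE (_ : (j : nat) != 0%N)); last by rewrite -lt0n; apply: leq_trans l.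
by rewrite zz_ip // mulNrn qq2 addrK.
Qed.

Lemma four_inj : injective zz.
Proof.
apply: inj_of => [i j|i j ij]; first exact: four_ok.
rewrite !zz_sq.
have N b : ((if b then (0 : R) else 1) *+ 4 != 1).
  case: b; first by rewrite mul0rn eq_sym oner_eq0.
  by rewrite (eqr_nat R 4 1).
by rewrite N.
Qed.
End Four.
Theorem theorem8 (R : rcfType) (d : nat) (hd : (1 <= d)%N) :
  (forall (m : nat) (x : 'I_m -> 'rV[R]_d),
      injective x ->
      (forall i j : 'I_m, i != j -> eucl_norm (x i + x j) = 1) ->
      (m <= sumnorm_bound d)%N) /\
  (exists x : 'I_(sumnorm_bound d) -> 'rV[R]_d,
      injective x /\
      (forall i j : 'I_(sumnorm_bound d), i != j -> eucl_norm (x i + x j) = 1)).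
Proof.
split; first by move=> m x; exact: upper.
rewrite /sumnorm_bound; case: eqP => [e|_].
  subst d; exists (@zz R); split; [exact: four_inj | exact: four_ok].
exists (@yy R d); split; [exact: gen_inj | exact: gen_ok].
Qed.
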